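(* Let $G$ be a simple graph with edge ideal $I(G)\subseteq\Bbbk[x_1,\ldots,x_N]$, let $s\ge1$, and let $L\in\operatorname{Inter}\left(I(G)^s,I(G)^{(s)}\right)$. Then $\operatorname{reg}(L)\ge 2s-1+\operatorname{im}(G)$.
   Context: $I(G)=(x_ix_j\mid\{i,j\}\in E(G))$. For a squarefree monomial ideal $I=P_1\cap\cdots\cap P_r$ (minimal primary decomposition), $I^{(s)}=P_1^s\cap\cdots\cap P_r^s$. For monomial ideals $J\subseteq K$, $\operatorname{Inter}(J,K)$ is the set of monomial ideals of the form $J+(f_1,\ldots,f_m)$ where the $f_j$ are among the minimal monomial generators of $K$. $\operatorname{im}(G)$ is the induced matching number of $G$ (maximum size of a set of pairwise disjoint edges forming an induced subgraph). $\operatorname{reg}$ is Castelnuovo–Mumford regularity. *)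

(* Defs.v *)
From HB Require Import structures.
From mathcomp Require Import all_boot all_order all_algebra.
Set Implicit Arguments.
Unset Strict Implicit.
Unset Printing Implicit Defensive.
Import GRing.Theory.

Definition mono (N : nat) := {ffun 'I_N -> nat}.
Definition mone (N : nat) : mono N := [ffun => 0%N].
Definition mmul (N : nat) (a b : mono N) : mono N := [ffun i => (a i + b i)%N].
Definition mdvd (N : nat) (a b : mono N) : bool := [forall i, a i <= b i].
Definition mvar (N : nat) (j : 'I_N) : mono N := [ffun i => nat_of_bool (i == j)].
Definition mdeg (N : nat) (a : mono N) : nat := (\sum_i a i)%N.

(* A monomial ideal is represented by (the predicate "is in the ideal" on
   monomials of) a finite list of monomial generators. *)
Definition in_mideal (N : nat) (gens : seq (mono N)) (m : mono N) : bool :=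
  has (fun g : mono N => mdvd g m) gens.

Fixpoint gens_pow (N : nat) (gens : seq (mono N)) (s : nat) : seq (mono N) :=
  match s with
  | 0 => [:: mone N]
  | s'.+1 => [seq mmul g h | g <- gens, h <- gens_pow gens s']
  end.

(* A simple graph on vertex set 'I_N is a symmetric irreflexive relation. *)
Definition edge_gens (N : nat) (G : rel 'I_N) : seq (mono N) :=
  [seq mmul (mvar p.1) (mvar p.2) | p <- enum [pred p : 'I_N * 'I_N | G p.1 p.2]].

Definition prime_gens (N : nat) (C : {set 'I_N}) : seq (mono N) :=
  [seq mvar j | j <- enum C].
Definition prime_contains (N : nat) (gens : seq (mono N)) (C : {set 'I_N}) : bool :=
  all (fun g : mono N => [exists j in C, 0 < g j]) gens.
(* The minimal primes of a squarefree monomial ideal I are the minimal monomial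
   primes P_C containing I, and I = \bigcap P_C is its minimal primary
   decomposition; I^(s) = \bigcap P_C^s. *)
Definition in_symbolic_pow (N : nat) (gens : seq (mono N)) (s : nat) (m : mono N) : bool :=
  [forall C : {set 'I_N},
     minset (prime_contains gens) C ==> in_mideal (gens_pow (prime_gens C) s) m].

Definition min_mono_gen (N : nat) (P : pred (mono N)) (m : mono N) : Prop :=
  P m /\ forall d : mono N, mdvd d m -> d != m -> ~~ P d.

Definition induced_matching (N : nat) (G : rel 'I_N) (M : {set 'I_N * 'I_N}) : bool :=
  [forall p in M, G p.1 p.2] &&
  [forall p in M, forall q in M, (p != q) ==>
     [&& p.1 != q.1, p.1 != q.2, p.2 != q.1, p.2 != q.2,
         ~~ G p.1 q.1, ~~ G p.1 q.2, ~~ G p.2 q.1 & ~~ G p.2 q.2]].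

Definition im (N : nat) (G : rel 'I_N) : nat :=
  (\max_(M : {set 'I_N * 'I_N} | induced_matching G M) #|M|)%N.

(* beta_{i,b}(I) = dim_k Tor_i(k, I)_b = dim_k H_i(K(x_1..x_N) (x) I)_b.
   In multidegree b, (K_i (x) I)_b has basis e_A (x) x^(b - 1_A) for
   A subset of [N] with |A| = i, A in supp b and x^(b - 1_A) in I. *)
Definition bminus (N : nat) (b : mono N) (A : {set 'I_N}) : mono N :=
  [ffun j => (b j - nat_of_bool (j \in A))%N].

Definition kface (N : nat) (P : pred (mono N)) (b : mono N) (A : {set 'I_N}) : bool :=
  [forall j in A, 0 < b j] && P (bminus b A).

Definition nsets (N : nat) := #|{set 'I_N}|.

(* Koszul differential d_i : (K_i (x) I)_b -> (K_{i-1} (x) I)_b,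
   e_A (x) m |-> sum_{j in A} (-1)^{#{k in A | k < j}} e_{A\j} (x) x_j m,
   as a matrix acting on row vectors, with basis indexed by all subsets
   of 'I_N (rows/columns outside the complex are zero). *)
Definition kdiff (F : fieldType) (N : nat) (P : pred (mono N)) (b : mono N) (i : nat)
  : 'M[F]_(nsets N, nsets N) :=
  (\matrix_(r < nsets N, c < nsets N)
    (let A : {set 'I_N} := @enum_val _ (mem [set: {set 'I_N}]) (cast_ord (esym (cardsT _)) r) in
     let B : {set 'I_N} := @enum_val _ (mem [set: {set 'I_N}]) (cast_ord (esym (cardsT _)) c) in
     if kface P b A && (#|A| == i) then
       \sum_(j in A) (if B == A :\ j then (-1) ^+ #|[set k in A | (k < j)%N]| else 0)
     else 0))%R.

Definition betti (F : fieldType) (N : nat) (P : pred (mono N)) (i : nat) (b : mono N) : nat :=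
  (#|[set A : {set 'I_N} | kface P b A & #|A| == i]|
     - \rank (kdiff F P b i) - \rank (kdiff F P b i.+1))%N.

(* reg(I) = max { |b| - i : beta_{i,b}(I) <> 0 }; "reg(I) >= r" unfolds to: *)
Definition reg_ge (F : fieldType) (N : nat) (P : pred (mono N)) (r : nat) : Prop :=
  exists (i : nat) (b : mono N), betti F P i b <> 0%N /\ (r + i <= mdeg b)%N.

(* Main.v *)
Require Import Defs.
From mathcomp Require Import all_boot all_order all_algebra.
From mathcomp Require Import zify.
Set Implicit Arguments.
Unset Strict Implicit.
Unset Printing Implicit Defensive.
Import GRing.Theory.
Local Open Scope ring_scope.
Lemma rank_lemma (F : fieldType) n (Fc : pred 'I_n) (D1 D2 : 'M[F]_n)
  (z : 'rV[F]_n) (w : 'cV[F]_n) :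
  (forall r c, ~~ Fc r -> D1 r c = 0) ->
  D2 *m D1 = 0 ->
  (forall r c, ~~ Fc c -> D2 r c = 0) ->
  z *m D1 = 0 -> (forall c, ~~ Fc c -> z 0 c = 0) ->
  D2 *m w = 0 -> z *m w != 0 ->
  (\rank D1 + \rank D2 < #|Fc|)%N.
Proof.
move=> D1F D21 D2F zD1 zF D2w zw.
pose f : 'I_#|Fc| -> 'I_n := enum_val.
pose P : 'M[F]_(#|Fc|, n) := \matrix_(i, j) ((f i == j)%:R).
have PPt : P *m P^T = 1%:M.
  apply/matrixP => i j; rewrite !mxE (bigD1 (f i)) //= big1 => [|c /negbTE ci].
    by rewrite !mxE eqxx mul1r addr0 (inj_eq (@enum_val_inj _ _)) eq_sym.
  by rewrite !mxE eq_sym ci mul0r.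
have PtP : forall r c, (P^T *m P) r c = ((r == c) && Fc r)%:R.
  move=> r c; rewrite !mxE.
  case Fr: (Fc r).
    have rE := enum_rankK_in Fr Fr.
    rewrite (bigD1 (enum_rank_in Fr r)) //= big1 => [|k /negbTE kr].
      by rewrite !mxE /f rE eqxx mul1r addr0 andbT.
    rewrite !mxE; case: eqP => [fk|]; last by rewrite mul0r.
    have := enum_valK_in Fr k; rewrite /f in fk; rewrite fk => kE.
    by rewrite kE eqxx in kr.
  rewrite andbF big1 // => k _; rewrite !mxE; case: eqP => [fk|]; last by rewrite mul0r.
  have := enum_valP k; rewrite /f in fk; rewrite fk unfold_in /= Fr //.
have rkP : \rank P = #|Fc|.
  apply/eqP; rewrite eqn_leq rank_leq_row /=.
  by rewrite -{1}(mxrank1 F #|Fc|) -PPt mxrankM_maxl.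
have D1E : P^T *m (P *m D1) = D1.
  apply/matrixP => r c; rewrite mulmxA !mxE (bigD1 r) //= big1 => [|k /negbTE kr].
    rewrite PtP eqxx /=; case Fr: (Fc r); first by rewrite mul1r addr0.
    by rewrite D1F ?Fr // mulr0 addr0.
  by rewrite PtP eq_sym kr mul0r.
have rkD1 : \rank (P *m D1) = \rank D1.
  apply/eqP; rewrite eqn_leq mxrankM_maxr /=.
  by rewrite -{1}D1E mxrankM_maxr.
have colF : forall m (U : 'M[F]_(m, n)), (forall r c, ~~ Fc c -> U r c = 0) ->
    (U <= P)%MS.
  move=> m U UF; apply/submxP; exists (U *m P^T); rewrite -mulmxA.
  apply/matrixP => r c; rewrite !mxE (bigD1 c) //= big1 => [|k /negbTE kc].
    rewrite PtP eqxx /=; case Fc': (Fc c); first by rewrite mulr1 addr0.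
    by rewrite UF ?Fc' // mul0r addr0.
  by rewrite PtP kc mulr0.
pose U := col_mx D2 z.
have sU : (U <= P :&: kermx D1)%MS.
  rewrite sub_capmx sub_kermx mul_col_mx D21 zD1 col_mx0 eqxx andbT.
  apply: colF => r c Fcc; rewrite /U.
  rewrite -(splitK r); case: (split r) => k /=; first by rewrite col_mxEu D2F.
  by rewrite col_mxEd ord1 zF.
have ltU : (D2 < U)%MS.
  rewrite ltmxE; apply/andP; split.
    by rewrite -addsmxE addsmxSl.
  apply/negP => /submxP [Y UY].
  move/eqP: zw; apply.
  have -> : z = dsubmx Y *m D2.
    by rewrite -(col_mxKd D2 z) -/U UY -{1}(vsubmxK Y) mul_col_mx col_mxKd.
  by rewrite -mulmxA D2w mulmx0.
have := mxrank_mul_ker P D1; rewrite rkD1 rkP => <-.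
rewrite ltn_add2l; apply: (leq_trans (rank_ltmx ltU)); exact: mxrankS.
Qed.
Section Koszul.
Variables (F : fieldType) (N : nat) (P : pred (mono N)) (b : mono N).
Hypothesis Pup : forall m m', mdvd m m' -> P m -> P m'.

Definition sof (r : 'I_(nsets N)) : {set 'I_N} :=
  @enum_val _ (mem [set: {set 'I_N}]) (cast_ord (esym (cardsT _)) r).

Lemma sof_inj : injective sof.
Proof. by move=> r1 r2 /enum_val_inj /cast_ord_inj. Qed.

Lemma sof_bij : bijective sof.
Proof. by apply: inj_card_bij; [exact: sof_inj | rewrite card_ord]. Qed.

Lemma sum_sof (G : {set 'I_N} -> F) :
  \sum_(r < nsets N) G (sof r) = \sum_(A : {set 'I_N}) G A.
Proof.
by rewrite (reindex sof) //; case: sof_bij => g h1 h2; exists g => x _.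
Qed.

Definition sg (A : {set 'I_N}) (j : 'I_N) : F := (-1) ^+ #|[set k in A | (k < j)%N]|.

Definition fc i (A : {set 'I_N}) := kface P b A && (#|A| == i).

Definition kzf (S B : {set 'I_N}) : F :=
  \sum_(j in S) (if B == S :\ j then sg S j else 0).

Definition kd i (A B : {set 'I_N}) : F := if fc i A then kzf A B else 0.

Lemma kdiffE i r c : kdiff F P b i r c = kd i (sof r) (sof c).
Proof. by rewrite /kdiff mxE. Qed.

Definition vec (g : {set 'I_N} -> F) : 'rV[F]_(nsets N) := \row_r g (sof r).

Lemma vec_mul g i c :
  (vec g *m kdiff F P b i) 0 c = \sum_(A : {set 'I_N}) g A * kd i A (sof c).
Proof.
rewrite mxE -sum_sof; apply: eq_bigr => r _; by rewrite mxE kdiffE.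
Qed.

Lemma sum_kzf (S : {set 'I_N}) (H : {set 'I_N} -> F) :
  \sum_(A : {set 'I_N}) kzf S A * H A = \sum_(j in S) sg S j * H (S :\ j).
Proof.
rewrite /kzf; under eq_bigr do rewrite mulr_suml.
rewrite exchange_big /=; apply: eq_bigr => j _.
rewrite (bigD1 (S :\ j)) //= eqxx big1 ?addr0 // => A /negbTE ->.
by rewrite mul0r.
Qed.

Lemma sg_lt (S : {set 'I_N}) (j k : 'I_N) : j \in S -> (j < k)%N -> sg (S :\ j) k = - sg S k.
Proof.
move=> jS jk; rewrite /sg.
rewrite [in RHS](cardsD1 j) inE jS jk /= exprS mulN1r opprK.
congr (_ ^+ _); apply: eq_card => x; rewrite !inE; by case: (x == j).
Qed.

Lemma sg_gt (S : {set 'I_N}) (j k : 'I_N) : (k < j)%N -> sg (S :\ j) k = sg S k.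
Proof.
move=> kj; rewrite /sg; congr (_ ^+ _); apply: eq_card => x; rewrite !inE.
case: eqP => // ->; rewrite /=; case: (j \in S) => //=; apply/esym/negbTE; rewrite -leqNgt ltnW //.
Qed.

Lemma antisym (S C : {set 'I_N}) :
  \sum_(j in S) sg S j * \sum_(k in S :\ j)
      (if C == S :\ j :\ k then sg (S :\ j) k else 0) = 0.
Proof.
pose h (j k : 'I_N) : F := if (j \in S) && (k \in S) && (C == S :\ j :\ k)
                  then sg S j * sg S k else 0.
have hsym : forall j k, h j k = h k j.
  move=> j k; rewrite /h; have -> : S :\ j :\ k = S :\ k :\ j.
    by rewrite !setDDl setUC.
  by rewrite (andbC (j \in S)) mulrC.
have E : forall j, sg S j * (\sum_(k in S :\ j)
      (if C == S :\ j :\ k then sg (S :\ j) k else 0)) *+ (j \in S) =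
   \sum_(k : 'I_N) ((if (k < j)%N then h j k else 0) - (if (j < k)%N then h j k else 0)).
  move=> j; case jS: (j \in S); last first.
    by rewrite mulr0n big1 // => k _; rewrite /h jS /= !if_same subrr.
  rewrite mulr1n mulr_sumr big_mkcond /=; apply: eq_bigr => k _.
  rewrite /h !inE jS /=.
  case: (ltngtP k j) => [kj|jk|/val_inj kj].
  - rewrite subr0 (_ : (k == j) = false); last by apply/negbTE; rewrite neq_ltn kj.
    case: (k \in S); last by [].
    case: (C == _); last by rewrite /= mulr0.
    by rewrite /= sg_gt.
  - rewrite sub0r (_ : (k == j) = false); last by apply/negbTE; rewrite neq_ltn jk orbT.
    case: (k \in S); last by rewrite /= oppr0.
    case: (C == _); last by rewrite /= mulr0 oppr0.
    by rewrite /= sg_lt // mulrN.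
  by rewrite kj eqxx /= subrr.
rewrite big_mkcond /=.
rewrite (eq_bigr (fun j : 'I_N => \sum_(k : 'I_N) ((if (k < j)%N then h j k else 0) -
                                   (if (j < k)%N then h j k else 0)))); last first.
  by move=> j _; rewrite -E; case: (j \in S); rewrite ?mulr1n ?mulr0n.
under eq_bigr do rewrite sumrB.
rewrite sumrB [X in _ - X]exchange_big /=.
apply/eqP; rewrite subr_eq0; apply/eqP; apply: eq_bigr => j _.
by apply: eq_bigr => k _; rewrite hsym.
Qed.

Lemma bminus_dvd (A B : {set 'I_N}) : A \subset B -> mdvd (bminus b B) (bminus b A).
Proof.
move=> AB; apply/forallP => k; rewrite !ffunE leq_sub2l //.
case kA: (k \in A); last by case: (k \in B).
by rewrite (subsetP AB k kA).
Qed.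

Lemma fc_down i (A : {set 'I_N}) (j : 'I_N) : fc i.+1 A -> j \in A -> fc i (A :\ j).
Proof.
rewrite /fc /kface => /andP [/andP [/forallP pos PA] /eqP cA] jA.
apply/andP; split; last by move: cA; rewrite (cardsD1 j A) jA add1n => -[->].
apply/andP; split.
  apply/forallP => k; apply/implyP => kA; move: (pos k).
  by rewrite (subsetP (subD1set A j) k kA).
apply: Pup PA; apply: bminus_dvd; exact: subD1set.
Qed.

Lemma dd0 i (S : {set 'I_N}) : (forall j, j \in S -> fc i (S :\ j)) ->
  vec (kzf S) *m kdiff F P b i = 0.
Proof.
move=> hS; apply/matrixP => r c; rewrite ord1 vec_mul sum_kzf mxE.
rewrite (eq_bigr (fun j => sg S j * \sum_(k in S :\ j)
      (if sof c == S :\ j :\ k then sg (S :\ j) k else 0))).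
  exact: antisym.
by move=> j jS; rewrite /kd hS.
Qed.

Lemma dd0' i : kdiff F P b i.+1 *m kdiff F P b i = 0.
Proof.
apply/matrixP => r c; rewrite !mxE.
case fr: (fc i.+1 (sof r)); last first.
  by rewrite big1 // => x _; rewrite kdiffE /kd fr mul0r.
transitivity ((vec (kzf (sof r)) *m kdiff F P b i) 0 c); last first.
  by rewrite dd0 ?mxE // => j jS; exact: fc_down fr jS.
rewrite mxE; apply: eq_bigr => x _.
by rewrite !kdiffE /kd fr mxE.
Qed.

Lemma card_fc i : #|[pred r | fc i (sof r)]| = #|[set A | kface P b A & #|A| == i]|.
Proof.
rewrite -(on_card_preimset (f := sof)); last first.
  by case: sof_bij => g h1 h2; exists g => x _.
by apply: eq_card => r; rewrite !inE.
Qed.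

Lemma betti_pos i (S : {set 'I_N}) (w : {set 'I_N} -> F) :
  (forall j, j \in S -> fc i (S :\ j)) ->
  (forall A, fc i.+1 A -> \sum_(j in A) sg A j * w (A :\ j) = 0) ->
  \sum_(j in S) sg S j * w (S :\ j) != 0 ->
  betti F P i b <> 0%N.
Proof.
move=> hS hw hz.
pose wc : 'cV[F]_(nsets N) := \col_c w (sof c).
have := @rank_lemma F _ [pred r | fc i (sof r)] (kdiff F P b i) (kdiff F P b i.+1)
  (vec (kzf S)) wc.
rewrite card_fc /betti => H; apply/eqP; rewrite -lt0n -subnDA subn_gt0.
apply: H.
- by move=> r c /negbTE /= fr; rewrite kdiffE /kd fr.
- exact: dd0'.
- move=> r c fc'; rewrite kdiffE /kd; case fr: (fc i.+1 (sof r)) => //.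
  rewrite /kzf big1 // => j jr; case: eqP => // E.
  by move: fc'; rewrite /= E fc_down.
- exact: dd0.
- move=> c fc'; rewrite mxE /kzf big1 // => j jS; case: eqP => // E.
  by move: fc'; rewrite /= E hS.
- apply/matrixP => r c; rewrite !mxE.
  case fr: (fc i.+1 (sof r)); last first.
    by rewrite big1 // => x _; rewrite kdiffE /kd fr mul0r.
  rewrite (eq_bigr (fun x => kzf (sof r) (sof x) * w (sof x))); last first.
    by move=> x _; rewrite kdiffE /kd fr mxE.
  by rewrite (sum_sof (fun B => kzf (sof r) B * w B)) sum_kzf hw.
- have zwE : (vec (kzf S) *m wc) 0 0 = \sum_(j in S) sg S j * w (S :\ j).
    rewrite mxE (eq_bigr (fun x => kzf S (sof x) * w (sof x))); last first.
      by move=> x _; rewrite !mxE.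
    by rewrite (sum_sof (fun B => kzf S B * w B)) sum_kzf.
  apply/eqP => /matrixP /(_ 0 0); rewrite zwE mxE; exact/eqP.
Qed.

End Koszul.
Lemma mdvdP N (a b : mono N) : reflect (forall i, a i <= b i)%N (mdvd a b).
Proof. exact: forallP. Qed.

Lemma mdvd_trans N (a b c : mono N) : mdvd a b -> mdvd b c -> mdvd a c.
Proof.
by move=> /mdvdP ab /mdvdP bc; apply/mdvdP => i; apply: leq_trans (ab i) (bc i).
Qed.

Lemma in_mideal_up N (gens : seq (mono N)) m m' :
  mdvd m m' -> in_mideal gens m -> in_mideal gens m'.
Proof.
move=> mm' /hasP [g gin gm]; apply/hasP; exists g => //; exact: mdvd_trans mm'.
Qed.

Definition csum N (C : {set 'I_N}) (m : mono N) : nat := (\sum_(j in C) m j)%N.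

Lemma csum_mdvd N C (m m' : mono N) : mdvd m m' -> (csum C m <= csum C m')%N.
Proof. by move=> /mdvdP h; apply: leq_sum => j _. Qed.

Lemma csum_mmul N C (m m' : mono N) : csum C (mmul m m') = (csum C m + csum C m')%N.
Proof. by rewrite /csum -big_split; apply: eq_bigr => j _; rewrite ffunE. Qed.

Lemma csum_mone N C : csum C (mone N) = 0%N.
Proof. by rewrite /csum big1 // => j _; rewrite ffunE. Qed.

Lemma gens_pow_csum N (gens : seq (mono N)) (C : {set 'I_N}) k g :
  (forall e, e \in gens -> 0 < csum C e)%N ->
  g \in gens_pow gens k -> (k <= csum C g)%N.
Proof.
move=> hg; elim: k g => [|k IH] g //= /allpairsP [[e h] /= [ein hin ->]].
rewrite csum_mmul -addn1 addnC leq_add //; [exact: hg | exact: IH].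
Qed.

Lemma mvar_csum N (C : {set 'I_N}) j : j \in C -> (0 < csum C (mvar j))%N.
Proof.
move=> jC; rewrite /csum (bigD1 j) //= ffunE eqxx. by [].
Qed.

Lemma prime_gens_csum N (C : {set 'I_N}) e : e \in prime_gens C -> (0 < csum C e)%N.
Proof. by move=> /mapP [j]; rewrite mem_enum => jC ->; exact: mvar_csum. Qed.

Lemma cover_csum N (gens : seq (mono N)) (C : {set 'I_N}) e :
  prime_contains gens C -> e \in gens -> (0 < csum C e)%N.
Proof.
move=> /allP h /h /existsP [j /andP [jC ej]].
by rewrite /csum (bigD1 j) //= ltn_addr.
Qed.

Lemma gens_pow_mul N (gens : seq (mono N)) k e h :
  e \in gens -> h \in gens_pow gens k -> mmul e h \in gens_pow gens k.+1.
Proof. by move=> eg hk /=; apply/allpairsP; exists (e, h). Qed.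

Definition pw N (e : mono N) k := iter k (mmul e) (mone N).

Lemma pw_in N (gens : seq (mono N)) e k : e \in gens -> pw e k \in gens_pow gens k.
Proof.
move=> eg; elim: k => [|k IH]; first by rewrite /= inE.
exact: gens_pow_mul.
Qed.

Lemma pwE N (e : mono N) k v : pw e k v = (k * e v)%N.
Proof. by elim: k => [|k IH]; rewrite /= ffunE // IH mulSn. Qed.
Lemma notin_L N (G : rel 'I_N) s (fs : seq (mono N))
  (hfs : forall f, f \in fs -> min_mono_gen (in_symbolic_pow (edge_gens G) s) f)
  (c : mono N) (j0 : 'I_N) :
  (c j0 < s)%N ->
  (forall u v, u \in [set v | 0 < c v]%N :\ j0 -> v \in [set v | 0 < c v]%N :\ j0 ->
     ~~ G u v) ->
  ~~ in_mideal (gens_pow (edge_gens G) s ++ fs) c.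
Proof.
move=> cj0 indep; set U := [set v | 0 < c v]%N :\ j0.
have cov : prime_contains (edge_gens G) (~: U).
  apply/allP => g /mapP [[x y]]; rewrite mem_enum inE /= => Gxy ->; apply/existsP.
  case xU: (x \in U).
    exists y; rewrite !ffunE eqxx addn1 andbT inE.
    by apply/negP => yU; move: (indep x y xU yU); rewrite Gxy.
  by exists x; rewrite !ffunE eqxx inE xU.
have [C minC CU] := minset_exists cov.
have bound : (csum C c <= c j0)%N.
  rewrite /csum; case j0C: (j0 \in C).
    rewrite (bigD1 j0) //= big1 ?addn0 // => j /andP [jC jj0].
    have := subsetP CU j jC; rewrite !inE jj0 /= lt0n negbK => /eqP //.
  rewrite big1 // => j jC.
  have := subsetP CU j jC; rewrite !inE lt0n.
  by case: eqP => [ej|_ /= /negPn /eqP //]; move: j0C; rewrite -ej jC.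
apply/hasP => [[g]]; rewrite mem_cat => /orP [gin | gfs] gc.
  have := gens_pow_csum (fun e => cover_csum (minsetp minC)) gin.
  move=> H; have := leq_trans H (leq_trans (csum_mdvd C gc) bound).
  by rewrite leqNgt cj0.
have [symf _] := hfs g gfs.
move/forallP: symf => /(_ C); rewrite minC /= => /hasP [g' g'in g'g].
have := gens_pow_csum (@prime_gens_csum _ C) g'in.
move=> H; have := leq_trans H (leq_trans (csum_mdvd C g'g)
   (leq_trans (csum_mdvd C gc) bound)).
by rewrite leqNgt cj0.
Qed.
Section Sign.
Variables (F : fieldType) (N : nat).

Definition eps (x : bool) : F := if x then -1 else 1.

Lemma epsM x y : eps x * eps y = eps (x (+) y).
Proof. by case: x; case: y; rewrite /eps /= ?mulN1r ?mul1r ?opprK. Qed.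

Lemma eps_neq0 x : eps x != 0.
Proof. by case: x; rewrite /eps ?oppr_eq0 oner_eq0. Qed.

Definition sgp (A : {set 'I_N}) (j : 'I_N) : F := \prod_(k in A) eps (k < j)%N.

Lemma sg_sgp A j : sg F A j = sgp A j.
Proof.
rewrite /sg /sgp -prodr_const big_mkcond /= [RHS]big_mkcond /=.
by apply: eq_bigr => k _; rewrite inE; case: (k \in A); case: (k < j)%N.
Qed.

Variable r : 'I_N -> nat.

Definition winv (T : {set 'I_N}) : F :=
  \prod_(x in T) \prod_(y in T) eps ((x < y)%N && (r y < r x)%N).

Lemma winv_neq0 T : winv T != 0.
Proof. by apply/prodf_neq0 => x _; apply/prodf_neq0 => y _; exact: eps_neq0. Qed.

Lemma sgp_neq0 A j : sgp A j != 0.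
Proof. by apply/prodf_neq0 => x _; exact: eps_neq0. Qed.

Lemma winv_add (B : {set 'I_N}) j R : j \notin B -> r j = R ->
  (forall x, x \in B -> r x != R) ->
  winv (j |: B) = \prod_(x in B) eps ((x < j)%N (+) (r x < R)%N) * winv B.
Proof.
move=> jB rj hB; rewrite /winv big_setU1 //= big_setU1 //= ltnn /= mul1r.
have inner : forall x, x \in B -> \prod_(y in j |: B) eps ((x < y)%N && (r y < r x)%N)
  = eps ((x < j)%N && (R < r x)%N) * \prod_(y in B) eps ((x < y)%N && (r y < r x)%N).
  by move=> x xB; rewrite big_setU1 //= rj.
rewrite [X in _ * X = _](eq_bigr _ inner).
rewrite big_split /= mulrA; congr (_ * _).
rewrite -big_split /=; apply: eq_bigr => x xB; rewrite epsM rj; congr (eps _).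
have xj : x != j by apply: contraNneq jB => <-.
have rx := hB x xB.
case: (ltngtP x j) => [lt|gt|/val_inj e]; last by rewrite e eqxx in xj.
  rewrite /=; case: (ltngtP (r x) R) => //= e; by rewrite e eqxx in rx.
rewrite /= ?addbF; case: (ltngtP (r x) R) => //= e; by rewrite e eqxx in rx.
Qed.

Lemma sign_pair (B : {set 'I_N}) j0 j1 R : j0 != j1 -> j0 \notin B -> j1 \notin B ->
  r j0 = R -> r j1 = R -> (forall x, x \in B -> r x != R) ->
  sgp (j0 |: (j1 |: B)) j0 * winv (j1 |: B) +
  sgp (j0 |: (j1 |: B)) j1 * winv (j0 |: B) = 0.
Proof.
move=> j01 j0B j1B r0 r1 hB.
have j0B' : j0 \notin j1 |: B by rewrite !inE negb_or j01.
rewrite (winv_add j1B r1 hB) (winv_add j0B r0 hB) /sgp.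
rewrite !big_setU1 //= !ltnn /= !mul1r.
set Q0 := \prod_(x in B) eps (x < j0)%N.
set Q1 := \prod_(x in B) eps (x < j1)%N.
set X1 := \prod_(x in B) eps ((x < j1)%N (+) (r x < R)%N).
set X0 := \prod_(x in B) eps ((x < j0)%N (+) (r x < R)%N).
have QX : Q0 * X1 = Q1 * X0.
  rewrite /Q0 /X1 /Q1 /X0 -!big_split /=; apply: eq_bigr => x _.
  by rewrite !epsM; congr (eps _); case: (x < j0)%N; case: (x < j1)%N; case: (r x < R)%N.
have E : eps (j1 < j0)%N = - eps (j0 < j1)%N.
  case: (ltngtP j0 j1) => [lt|gt|/val_inj e]; last by rewrite e eqxx in j01.
    by rewrite /eps opprK.
  by [].
by rewrite E !mulrA -(mulrA _ Q0) QX mulNr addrC mulNr !mulrA subrr.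
Qed.

End Sign.
Section Matching.
Variables (N : nat) (G : rel 'I_N).
Hypotheses (Gsym : symmetric G) (Girr : irreflexive G).
Variable M : {set 'I_N * 'I_N}.
Hypothesis hM : induced_matching G M.

Lemma im_edge p : p \in M -> G p.1 p.2.
Proof. by case/andP: hM => /forallP /(_ p) /implyP h _. Qed.

Lemma im_sep p q : p \in M -> q \in M -> p != q ->
  [&& p.1 != q.1, p.1 != q.2, p.2 != q.1, p.2 != q.2,
      ~~ G p.1 q.1, ~~ G p.1 q.2, ~~ G p.2 q.1 & ~~ G p.2 q.2].
Proof.
move=> pM qM pq; case/andP: hM => _ /forallP /(_ p) /implyP /(_ pM).
by move/forallP /(_ q) /implyP /(_ qM) /implyP /(_ pq).
Qed.

Lemma im_neq p : p \in M -> p.1 != p.2.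
Proof. by move=> /im_edge e; apply/eqP => ee; move: e; rewrite ee Girr. Qed.

Lemma im_inj1 p q : p \in M -> q \in M -> p.1 = q.1 -> p = q.
Proof.
move=> pM qM e; apply/eqP; apply/negP => /negP pq.
by have := im_sep pM qM pq; rewrite e eqxx.
Qed.

Lemma im_inj2 p q : p \in M -> q \in M -> p.2 = q.2 -> p = q.
Proof.
move=> pM qM e; apply/eqP; apply/negP => /negP pq.
by have := im_sep pM qM pq; rewrite e eqxx !andbF.
Qed.

Lemma im_12 p q : p \in M -> q \in M -> p.1 != q.2.
Proof.
move=> pM qM; case: (eqVneq p q) => [->|pq]; first exact: im_neq.
by case/and3P: (im_sep pM qM pq).
Qed.

Definition pa (v : 'I_N) : 'I_N :=
  match [pick p in M | p.1 == v] with
  | Some p => p.2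
  | None => match [pick p in M | p.2 == v] with Some p => p.1 | None => v end
  end.

Lemma paE1 p : p \in M -> pa p.1 = p.2.
Proof.
move=> pM; rewrite /pa; case: pickP => [q /andP [qM /eqP e]|none].
  by rewrite (im_inj1 qM pM e).
by have := none p; rewrite pM eqxx.
Qed.

Lemma paE2 p : p \in M -> pa p.2 = p.1.
Proof.
move=> pM; rewrite /pa; case: pickP => [q /andP [qM /eqP e]|_].
  by have := im_12 qM pM; rewrite e eqxx.
case: pickP => [q /andP [qM /eqP e]|none]; first by rewrite (im_inj2 qM pM e).
by have := none p; rewrite pM eqxx.
Qed.

Definition S1 := [set p.1 | p in M].
Definition S2 := [set p.2 | p in M].
Definition W := S1 :|: S2.

Lemma inWP v : reflect (exists2 p, p \in M & (v = p.1) \/ (v = p.2)) (v \in W).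
Proof.
apply: (iffP idP).
  by rewrite inE => /orP [] /imsetP [p pM ->]; exists p => //; [left|right].
move=> [p pM hv]; rewrite inE; apply/orP.
by case: hv => ->; [left|right]; apply/imsetP; exists p.
Qed.

Lemma paW v : v \in W -> pa v \in W.
Proof.
move=> /inWP [p pM hv]; apply/inWP; exists p => //.
by case: hv => ->; rewrite ?(paE1 pM) ?(paE2 pM); [right|left].
Qed.

Lemma paK v : v \in W -> pa (pa v) = v.
Proof. by move=> /inWP [p pM [->|->]]; rewrite ?(paE1 pM) ?(paE2 pM) ?(paE1 pM). Qed.

Lemma pa_neq v : v \in W -> pa v != v.
Proof.
move=> /inWP [p pM [->|->]]; rewrite ?(paE1 pM) ?(paE2 pM).
  by rewrite eq_sym; exact: im_neq.
exact: im_neq.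
Qed.

Lemma G_pa v : v \in W -> G v (pa v).
Proof.
move=> /inWP [p pM [->|->]]; rewrite ?(paE1 pM) ?(paE2 pM).
  exact: im_edge.
by rewrite Gsym; exact: im_edge.
Qed.

Lemma ind u v : u \in W -> v \in W -> G u v -> v = pa u.
Proof.
move=> /inWP [p pM hu] /inWP [q qM hv] Guv.
case: (eqVneq p q) => [pq|pq].
  subst q; case: hu => eu; case: hv => ev; subst u v;
    rewrite ?(paE1 pM) ?(paE2 pM) //; by rewrite Girr in Guv.
have := im_sep pM qM pq.
by case: hu => eu; case: hv => ev; subst u v; rewrite Guv !andbF.
Qed.

Lemma S1S2 : [disjoint S1 & S2].
Proof.
apply/pred0P => v /=; apply/negP => /andP [/imsetP [p pM ->] /imsetP [q qM e]].
by have := im_12 pM qM; rewrite e eqxx.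
Qed.

Lemma card_S1 : #|S1| = #|M|.
Proof. by rewrite card_in_imset // => p q pM qM; apply: im_inj1. Qed.

Lemma card_S2 : #|S2| = #|M|.
Proof. by rewrite card_in_imset // => p q pM qM; apply: im_inj2. Qed.

Lemma card_W : #|W| = (#|M| + #|M|)%N.
Proof. by rewrite /W cardsU (disjoint_setI0 S1S2) cards0 subn0 card_S1 card_S2. Qed.

Lemma pa_S1 v : v \in W -> (v \in S1) = (pa v \notin S1).
Proof.
move=> /inWP [p pM [->|->]]; rewrite ?(paE1 pM) ?(paE2 pM).
  rewrite (_ : p.1 \in S1); last by apply/imsetP; exists p.
  apply/esym/negP => /imsetP [q qM e].
  by have := im_12 qM pM; rewrite e eqxx.
rewrite (_ : p.1 \in S1) /=; last by apply/imsetP; exists p.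
by apply/negbTE/negP => /imsetP [q qM e]; have := im_12 qM pM; rewrite e eqxx.
Qed.


Variables (F : fieldType) (s : nat) (fs : seq (mono N)).
Hypothesis hs : (1 <= s)%N.
Hypothesis hfs : forall f, f \in fs -> min_mono_gen (in_symbolic_pow (edge_gens G) s) f.
Variable p1 : 'I_N * 'I_N.
Hypothesis p1M : p1 \in M.

Definition a := p1.1.
Definition a' := p1.2.

Lemma pa_a : pa a = a'. Proof. exact: paE1. Qed.
Lemma pa_a' : pa a' = a. Proof. exact: paE2. Qed.
Lemma aW : a \in W. Proof. by apply/inWP; exists p1 => //; left. Qed.
Lemma a'W : a' \in W. Proof. by apply/inWP; exists p1 => //; right. Qed.
Lemma a_neq : a != a'. Proof. exact: im_neq. Qed.
Lemma aS1 : a \in S1. Proof. by apply/imsetP; exists p1. Qed.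
Lemma a'S1 : a' \notin S1.
Proof. by rewrite -pa_a -(pa_S1 aW) aS1. Qed.

Definition W1 := W :\ a :\ a'.

Lemma inW1 v : (v \in W1) = [&& v != a', v != a & v \in W].
Proof. by rewrite !in_setD1. Qed.

Lemma paW1 v : v \in W1 -> pa v \in W1.
Proof.
rewrite !inW1 => /and3P [va' va vW]; apply/and3P; split; last exact: (paW vW).
  by apply: contraNneq va => e; rewrite -(paK vW) e pa_a'.
by apply: contraNneq va' => e; rewrite -(paK vW) e pa_a.
Qed.

Lemma W1W v : v \in W1 -> v \in W.
Proof. by rewrite inW1 => /and3P []. Qed.

Definition bb : mono N :=
  [ffun v => if v \in W then (if (v == a) || (v == a') then s else 1%N) else 0%N].

Lemma bb_pos v : (0 < bb v)%N = (v \in W).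
Proof. by rewrite ffunE; case: (v \in W) => //; case: ifP. Qed.

Lemma bb_W1 v : v \in W1 -> bb v = 1%N.
Proof. by rewrite inW1 ffunE => /and3P [/negbTE -> /negbTE -> ->]. Qed.

Lemma bb_a : bb a = s. Proof. by rewrite ffunE aW eqxx. Qed.
Lemma bb_a' : bb a' = s. Proof. by rewrite ffunE a'W eqxx orbT. Qed.

Definition Pl := in_mideal (gens_pow (edge_gens G) s ++ fs).

Lemma Pl_up m m' : mdvd m m' -> Pl m -> Pl m'.
Proof. exact: in_mideal_up. Qed.

Definition eg (p : 'I_N * 'I_N) : mono N := mmul (mvar p.1) (mvar p.2).

Lemma eg_in p : p \in M -> eg p \in edge_gens G.
Proof. by move=> pM; apply: (map_f (fun p => eg p)); rewrite mem_enum inE; exact: im_edge. Qed.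

Lemma egE p v : eg p v = ((v == p.1) + (v == p.2))%N.
Proof. by rewrite !ffunE. Qed.

Lemma Pl_gen (g m : mono N) : g \in gens_pow (edge_gens G) s -> (forall v, g v <= m v)%N -> Pl m.
Proof.
move=> gin h; apply/hasP; exists g; first by rewrite mem_cat gin.
exact/mdvdP.
Qed.

Lemma hS j : j \in S1 -> fc Pl bb #|M|.-1 (S1 :\ j).
Proof.
move=> jS; rewrite /fc /kface; apply/andP; split; last first.
  by move: (cardsD1 j S1); rewrite jS card_S1 add1n => ->.
apply/andP; split.
  apply/forallP => k; apply/implyP => /setD1P [_ kS]; rewrite bb_pos inE kS //.
case/imsetP: jS => q qM ->.
case: (eqVneq q p1) => [->|qp].
  apply: (Pl_gen (g := pw (eg p1) s)); first exact: pw_in (eg_in p1M).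
  move=> v; rewrite pwE egE !ffunE -/a -/a'.
  case: (eqVneq v a) => [->|va].
    by rewrite (negbTE a_neq) muln1 aW /= in_setD1 eqxx subn0.
  case: (eqVneq v a') => [->|va'].
    by rewrite muln1 a'W /= in_setD1 (negbTE a'S1) andbF subn0.
  by rewrite muln0.
have hq1 : q.1 != a by apply/eqP => e; by move: qp; rewrite (im_inj1 qM p1M e) eqxx.
have hq1' : q.1 != a' := im_12 qM p1M.
have hq2 : q.2 != a by rewrite eq_sym; exact: im_12 p1M qM.
have hq2' : q.2 != a' by apply/eqP => e; by move: qp; rewrite (im_inj2 qM p1M e) eqxx.
have hq12 : q.1 != q.2 := im_neq qM.
have q2S : q.2 \notin S1 by rewrite -(paE1 qM) -pa_S1; [apply/imsetP; exists q | apply/inWP; exists q => //; left].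
have q1W : q.1 \in W by apply/inWP; exists q => //; left.
have q2W : q.2 \in W by apply/inWP; exists q => //; right.
apply: (Pl_gen (g := mmul (eg q) (pw (eg p1) s.-1))).
  by rewrite -{2}(prednK hs); apply: gens_pow_mul; [exact: eg_in | exact: pw_in (eg_in p1M)].
move=> v; rewrite !ffunE pwE egE -/a -/a'.
case: (eqVneq v a) => [->|va].
  rewrite (negbTE a_neq) (eq_sym a) (negbTE hq1) (eq_sym a) (negbTE hq2) muln1 aW /=.
  by rewrite in_setD1 eq_sym hq1 aS1 subn1.
case: (eqVneq v a') => [->|va'].
  rewrite (eq_sym a') (negbTE hq1') (eq_sym a') (negbTE hq2') muln1.
  by rewrite a'W /= in_setD1 (negbTE a'S1) andbF subn0 leq_pred.
rewrite muln0 addn0 /=.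
case: (eqVneq v q.1) => [->|vq1].
  by rewrite (negbTE hq12) q1W in_setD1 eqxx.
case: (eqVneq v q.2) => [->|vq2] //.
by rewrite q2W in_setD1 (negbTE q2S) andbF.
Qed.

Definition rr (v : 'I_N) : nat := minn v (pa v).

Lemma rr_pa v : v \in W -> rr (pa v) = rr v.
Proof. by move=> vW; rewrite /rr paK // minnC. Qed.

Lemma rr_cases x : rr x = x \/ rr x = pa x.
Proof. by rewrite /rr /minn; case: ifP; [left|right]. Qed.

Lemma rr_inj x y : x \in W -> y \in W -> rr x = rr y -> y = x \/ y = pa x.
Proof.
move=> xW yW e.
case: (rr_cases x) => ex; case: (rr_cases y) => ey; rewrite ex ey in e.
- by left; apply/val_inj.
- by right; rewrite -(paK yW); congr pa; apply/val_inj.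
- by right; apply/val_inj.
- by left; rewrite -(paK yW) -(paK xW); congr pa; apply/val_inj.
Qed.

Definition trans (T : {set 'I_N}) :=
  (T \subset W1) && [forall v in W1, (v \in T) != (pa v \in T)].

Definition wf (T : {set 'I_N}) : F := if trans T then winv F rr T else 0.

Lemma hz : \sum_(j in S1) sg F S1 j * wf (S1 :\ j) != 0.
Proof.
rewrite (bigD1 a) ?aS1 //= big1 ?addr0; last first.
  move=> j /andP [jS ja]; rewrite /wf /trans.
  have : ~~ (S1 :\ j \subset W1).
    apply/negP => /subsetP /(_ a); rewrite in_setD1 eq_sym ja aS1 => /(_ erefl).
    by rewrite inW1 eqxx andbF.
  by move/negbTE => ->; rewrite mulr0.
have tr : trans (S1 :\ a).
  apply/andP; split.
    apply/subsetP => x; rewrite in_setD1 => /andP [xa /imsetP [p pM xE]].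
    rewrite inW1 xa /=; apply/andP; split.
      by rewrite xE; exact: im_12.
    by apply/inWP; exists p => //; left.
  apply/forallP => v; apply/implyP => vW1.
  have vW := W1W vW1.
  have pvW1 := paW1 vW1.
  move: vW1 pvW1; rewrite !inW1 => /and3P [_ va _] /and3P [_ pva _].
  by rewrite !in_setD1 va pva /= (pa_S1 vW); case: (pa v \in S1).
rewrite /wf tr sg_sgp; apply: mulf_neq0; [exact: sgp_neq0 | exact: winv_neq0].
Qed.


Lemma hw A : fc Pl bb #|M| A -> \sum_(j in A) sg F A j * wf (A :\ j) = 0.
Proof.
rewrite /fc /kface => /andP [/andP [/forallP pos PA] _].
have AW : forall k, k \in A -> k \in W.
  by move=> k kA; move: (pos k); rewrite kA /= bb_pos.
case: (pickP [pred j | (j \in A) && trans (A :\ j)]) => [j0 /andP [j0A tr0] | none];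
  last first.
  apply: big1 => j jA; have := none j; rewrite /= jA /= => trj.
  by rewrite /wf trj mulr0.
have j0W := AW j0 j0A.
case j0W1 : (j0 \in W1); last first.
  exfalso.
  have j0e : (j0 == a') || (j0 == a) by move: j0W1; rewrite inW1 j0W andbT; case: (j0 == a'); case: (j0 == a).
  have bbj0 : bb j0 = s by case/orP: j0e => /eqP ->; rewrite ?bb_a ?bb_a'.
  move: PA; apply/negP; apply: (notin_L hfs (j0 := j0)).
    by rewrite ffunE bbj0 j0A subn1 prednK // leqnn.
  move=> u v; rewrite !in_setD1 !inE => /andP [uj0 cu] /andP [vj0 cv]; apply/negP => Guv.
  rewrite ffunE in cu; rewrite ffunE in cv.
  have uW : u \in W by rewrite -bb_pos (leq_trans cu (leq_subr _ _)).
  have vW : v \in W by rewrite -bb_pos (leq_trans cv (leq_subr _ _)).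
  have vE := ind uW vW Guv.
  case uW1 : (u \in W1).
    have puW1 := paW1 uW1.
    move: cu cv; rewrite vE !bb_W1 //.
    case uA: (u \in A) => //; case puA: (pa u \in A) => // _ _.
    have /andP [_ /forallP /(_ u)] := tr0; rewrite uW1 /= !in_setD1 uA puA !andbF //.
  have ue : (u == a') || (u == a) by move: uW1; rewrite inW1 uW andbT; case: (u == a'); case: (u == a).
  move: vj0; rewrite vE.
  case/orP: ue => /eqP ue; case/orP: j0e => /eqP je; subst u j0.
  - by rewrite eqxx in uj0.
  - by rewrite pa_a' eqxx.
  - by rewrite pa_a eqxx.
  - by rewrite eqxx in uj0.
set j1 := pa j0.
have j1W1 : j1 \in W1 := paW1 j0W1.
have j1A0 : j1 \in A :\ j0.
  have /andP [_ /forallP /(_ j0)] := tr0; rewrite j0W1 /= in_setD1 eqxx /=.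
  by case: (j1 \in A :\ j0).
have j10 : j1 != j0 := pa_neq j0W.
have j1A : j1 \in A by move: j1A0; rewrite in_setD1 => /andP [].
have tr1 : trans (A :\ j1).
  apply/andP; split.
    apply/subsetP => x; rewrite in_setD1 => /andP [xj1 xA].
    case: (eqVneq x j0) => [->//|xj0].
    by have /andP [/subsetP sub _] := tr0; apply: sub; rewrite in_setD1 xj0.
  apply/forallP => v; apply/implyP => vW1.
  have vW := W1W vW1.
  case: (eqVneq v j0) => [->|vj0].
    by rewrite -/j1 !in_setD1 eqxx j0A; move: j10; rewrite eq_sym => ->.
  case: (eqVneq v j1) => [->|vj1].
    by rewrite /j1 (paK j0W) !in_setD1 eqxx j0A (eq_sym j0) (pa_neq j0W).
  have pvj1 : pa v != j1 by apply: contraNneq vj0 => e; rewrite -(paK vW) e /j1 paK.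
  have pvj0 : pa v != j0 by apply: contraNneq vj1 => e; rewrite -(paK vW) e.
  have /andP [_ /forallP /(_ v)] := tr0; rewrite vW1 /= !in_setD1 vj0 vj1 pvj0 pvj1 //.
rewrite (bigD1 j0) //= (bigD1 j1) /=; last by rewrite j1A j10.
rewrite big1 ?addr0; last first.
  move=> j /andP [/andP [jA jj0] jj1]; rewrite /wf.
  have : ~~ trans (A :\ j).
    apply/negP => /andP [_ /forallP /(_ j0)]; rewrite j0W1 /= -/j1 !in_setD1.
    by rewrite (eq_sym j0) jj0 j0A (eq_sym j1) jj1 j1A.
  by move/negbTE => ->; rewrite mulr0.
rewrite /wf tr0 tr1 !sg_sgp.
set B := A :\ j0 :\ j1.
have E0 : j1 |: B = A :\ j0 by rewrite setD1K.
have E1 : j0 |: B = A :\ j1.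
  have -> : B = A :\ j1 :\ j0 by rewrite /B !setDDl setUC.
  by rewrite setD1K // in_setD1 j0A andbT; move: j10; rewrite eq_sym.
have AE : j0 |: (j1 |: B) = A by rewrite E0 setD1K.
have := @sign_pair F N rr B j0 j1 (rr j0).
rewrite AE E0 E1; apply => //.
- by rewrite eq_sym.
- by rewrite !in_setD1 eqxx andbF.
- by rewrite !in_setD1 eqxx.
- exact: rr_pa.
- move=> x; rewrite !in_setD1 => /and3P [xj1 xj0 xA]; apply/eqP => e.
  have xW1 : x \in W1.
    by have /andP [/subsetP sub _] := tr0; apply: sub; rewrite in_setD1 xj0.
  case: (rr_inj j0W (W1W xW1) (esym e)) => ex.
    by rewrite ex eqxx in xj0.
  by rewrite ex eqxx in xj1.
Qed.


Lemma main_sec : reg_ge F Pl (2 * s - 1 + #|M|)%N.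
Proof.
have m1 : (0 < #|M|)%N by apply/card_gt0P; exists p1.
exists #|M|.-1, bb; split.
  apply: (@betti_pos F N Pl bb Pl_up #|M|.-1 S1 wf).
  - exact: hS.
  - by rewrite (prednK m1); exact: hw.
  - exact: hz.
have aW' : a \in W := aW.
have a'Wa : a' \in W :\ a by rewrite in_setD1 eq_sym a_neq a'W.
have -> : mdeg bb = \sum_(v in W) bb v.
  rewrite /mdeg [RHS]big_mkcond /=; apply: eq_bigr => v _.
  by rewrite ffunE; case: (v \in W).
rewrite (big_setD1 a aW') (big_setD1 a' a'Wa) /= bb_a bb_a'.
rewrite (eq_bigr (fun _ => 1%N)); last by move=> v vW1; rewrite bb_W1.
rewrite sum1_card.
have cW := card_W.
rewrite (cardsD1 a) aW' (cardsD1 a') a'Wa in cW.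
rewrite -/W1 in cW |- *.
move: cW hs m1; set w1 := #|W1|; set m := #|M|; clear.
move=> cW hs m1; rewrite /= in cW; lia.
Qed.

End Matching.
Local Close Scope ring_scope.
Theorem lemma4p3 (F : fieldType) (N : nat) (G : rel 'I_N)
  (Gsym : symmetric G) (Girr : irreflexive G) (Gedge : exists i j, G i j)
  (s : nat) (hs : (1 <= s)%N) (fs : seq (mono N))
  (hfs : forall f, f \in fs ->
           min_mono_gen (in_symbolic_pow (edge_gens G) s) f) :
  reg_ge F (in_mideal (gens_pow (edge_gens G) s ++ fs)) (2 * s - 1 + im G)%N.
Proof.
have im0 : induced_matching G set0.
  by apply/andP; split; apply/forallP => p; rewrite inE.
have [M hM imE] : {M | induced_matching G M & im G = #|M|}.
  have pos : (0 < #|(fun M : {set 'I_N * 'I_N} => induced_matching G M)|)%N.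
    by apply/card_gt0P; exists set0.
  have [M hM E] := @eq_bigmax_cond _ (fun M : {set 'I_N * 'I_N} => induced_matching G M)
     (fun M => #|M|) pos.
  by exists M.
have [p1 p1M] : exists p1, p1 \in M.
  have : (0 < im G)%N.
    case: Gedge => i [j Gij].
    have h1 : induced_matching G [set (i, j)].
      apply/andP; split; apply/forallP => p; apply/implyP; rewrite inE => /eqP -> //.
      by apply/forallP => q; apply/implyP; rewrite inE => /eqP ->; rewrite eqxx.
    by apply: leq_trans (leq_bigmax_cond _ h1); rewrite cards1.
  by rewrite imE => /card_gt0P.
rewrite imE; exact: (main_sec Girr hM F hs hfs p1M).
Qed.
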